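(* Let $m,n\in\mathbb{Z}_{\ge0}$ and $N\in\mathbb{Z}_{>0}$. If $E_4^{\,m}E_6^{\,n}$ satisfies a monic MLDE of weight $4m+6n$ and order $N$, then $N\ge\max\{m,n\}+1$.
   Context: $q=e^{2\pi iz}$, $f'=\frac{1}{2\pi i}\frac{df}{dz}$; $E_2,E_4,E_6$ are the Eisenstein series with constant term $1$, and $\mathcal{M}_w$ is the space of holomorphic modular forms of weight $w$ on $\mathrm{SL}(2,\mathbb{Z})$. For $k\in\mathbb{R}$, $D_kf=f'-\frac{k}{12}E_2f$, $D_k^{(0)}=\mathrm{id}$, $D_k^{(j)}=D_{k+2j-2}\circ\cdots\circ D_k$. A monic MLDE of weight $k$ and order $N$ is an equation $(D_k^{(N)}+g_1D_k^{(N-1)}+\cdots+g_N)f=0$ with $g_i\in\mathcal{M}_{2i}$. *)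

(* Defs.v *)
From Stdlib Require Import Reals List ZArith ClassicalEpsilon.
From Coquelicot Require Import Coquelicot.
Open Scope R_scope.

Definition cexp (z : C) : C := (exp (Re z) * cos (Im z), exp (Re z) * sin (Im z)).

Definition qvar (z : C) : C := cexp (Cmult (RtoC (2 * PI)) (Cmult Ci z)).

Definition CSeries (a : nat -> C) : C :=
  (Series (fun n => Re (a n)), Series (fun n => Im (a n))).

Definition sigma (k n : nat) : R :=
  fold_right Rplus 0
    (map (fun d => if Nat.eqb (n mod d) 0 then INR d ^ k else 0) (seq 1 n)).

Definition Eis (c : R) (k : nat) (z : C) : C :=
  Cplus 1 (Cmult (RtoC c)
    (CSeries (fun j => Cmult (RtoC (sigma (k - 1) (S j))) (Cpow (qvar z) (S j))))).
Definition E2 : C -> C := Eis (-24) 2.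
Definition E4 : C -> C := Eis 240 4.
Definition E6 : C -> C := Eis (-504) 6.

(* complex derivative d/dz (total: some value when it exists, arbitrary otherwise) *)
Definition cderiv (f : C -> C) (z : C) : C :=
  epsilon (inhabits (RtoC 0)) (fun l : C => @is_derive C_AbsRing C_NormedModule f z l).

Definition qderiv (f : C -> C) (z : C) : C :=
  Cmult (Cinv (Cmult (RtoC (2 * PI)) Ci)) (cderiv f z).

Definition Serre (k : R) (f : C -> C) (z : C) : C :=
  Cminus (qderiv f z) (Cmult (RtoC (k / 12)) (Cmult (E2 z) (f z))).

Fixpoint SerreIter (k : R) (j : nat) (f : C -> C) : C -> C :=
  match j with
  | O => f
  | S j' => Serre (k + 2 * INR j') (SerreIter k j' f)
  end.

Definition upper_half (z : C) : Prop := 0 < Im z.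

Definition is_modular_form (w : nat) (g : C -> C) : Prop :=
  (forall z, upper_half z -> exists l : C, @is_derive C_AbsRing C_NormedModule g z l) /\
  (forall a b c d : Z, (a * d - b * c)%Z = 1%Z -> forall z, upper_half z ->
     g (Cdiv (Cplus (Cmult (IZR a) z) (IZR b)) (Cplus (Cmult (IZR c) z) (IZR d)))
     = Cmult (Cpow (Cplus (Cmult (IZR c) z) (IZR d)) w) (g z)) /\
  (* holomorphic at the cusp: bounded as Im z -> +oo *)
  (exists M : R, forall z, 1 <= Im z -> Cmod (g z) <= M).

Definition satisfies_monic_MLDE (k : R) (N : nat) (f : C -> C) : Prop :=
  exists g : nat -> C -> C,
    (forall i, (1 <= i <= N)%nat -> is_modular_form (2 * i) (g i)) /\
    (forall z, upper_half z ->
       Cplus (SerreIter k N f z)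
         (fold_right Cplus (RtoC 0)
            (map (fun i => Cmult (g i z) (SerreIter k (N - i) f z)) (seq 1 N))) = RtoC 0).

(* Main.v *)
Require Import Defs.
From Stdlib Require Import Reals Arith Lra Lia List ClassicalEpsilon Classical.
From Coquelicot Require Import Coquelicot.
Require Import Defs.
Open Scope R_scope.


Lemma cderiv_eq f z l : @is_derive C_AbsRing C_NormedModule f z l -> cderiv f z = l.
Proof.
  intros H. unfold cderiv.
  pose proof (epsilon_spec (inhabits (RtoC 0)) (fun l : C => @is_derive C_AbsRing C_NormedModule f z l) (ex_intro _ l H)) as HH.
  rewrite <- (is_C_derive_unique f z l H).
  apply eq_sym, is_C_derive_unique; exact HH.
Qed.

Lemma is_derive_bound (f : C -> C) z l :
  (forall eps : R, 0 < eps -> exists d : R, 0 < d /\ forall w, Cmod (w - z) < d ->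
     Cmod (f w - f z - (w - z) * l) <= eps * Cmod (w - z)) ->
  @is_derive C_AbsRing C_NormedModule f z l.
Proof.
  intros H. split.
  - apply is_linear_scal_l.
  - intros x Hx. pose proof (@is_filter_lim_locally_unique C_AbsRing (AbsRing_NormedModule C_AbsRing) z x Hx) as Hx2. subst x.
    intros eps. apply (@locally_le_locally_norm C_AbsRing (AbsRing_NormedModule C_AbsRing)).
    destruct (H eps (cond_pos eps)) as [d [Hd Hb]].
    exists (mkposreal d Hd). intros w Hw. simpl in Hw.
    apply Hb. exact Hw.
Qed.


Lemma mvt0 (f f' : R -> R) M : (forall x, derivable_pt_lim f x (f' x)) -> f 0 = 0 ->
  (forall x, Rabs x <= 1 -> Rabs (f' x) <= M) -> forall x, Rabs x <= 1 -> Rabs (f x) <= M * Rabs x.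
Proof.
  intros Hd H0 Hb x Hx.
  destruct (MVT_abs f f' 0 x (fun c _ => Hd c)) as [c [Hc Hr]].
  rewrite H0, Rminus_0_r in Hc. rewrite Rminus_0_r in Hc. rewrite Hc.
  apply Rmult_le_compat_r. apply Rabs_pos. apply Hb.
  unfold Rmin, Rmax in Hr; destruct (Rle_dec 0 x); apply Rabs_le; split_Rabs; lra.
Qed.

Lemma mvt1 (f f' : R -> R) M : (forall x, derivable_pt_lim f x (f' x)) -> f 0 = 0 ->
  (forall x, Rabs x <= 1 -> Rabs (f' x) <= M * Rabs x) -> forall x, Rabs x <= 1 -> Rabs (f x) <= M * x ^ 2.
Proof.
  intros Hd H0 Hb x Hx.
  destruct (MVT_abs f f' 0 x (fun c _ => Hd c)) as [c [Hc Hr]].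
  rewrite H0, Rminus_0_r in Hc. rewrite Rminus_0_r in Hc. rewrite Hc.
  assert (Hcx : Rabs c <= Rabs x).
  { unfold Rmin, Rmax in Hr; destruct (Rle_dec 0 x); split_Rabs; lra. }
  assert (Hc1 : Rabs c <= 1) by lra.
  assert (0 <= M).
  { assert (H1 : Rabs (f' 1) <= M * Rabs 1) by (apply Hb; rewrite Rabs_R1; lra).
    rewrite Rabs_R1 in H1. pose proof (Rabs_pos (f' 1)). lra. }
  specialize (Hb c Hc1).
  replace (M * x ^ 2) with ((M * Rabs x) * Rabs x).
  2:{ rewrite Rmult_assoc, <- Rabs_mult. rewrite Rabs_right. ring. nra. }
  apply Rmult_le_compat_r. apply Rabs_pos. 
  apply Rle_trans with (M * Rabs c); auto. apply Rmult_le_compat_l; auto.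
Qed.

Lemma exp_le3 x : x <= 1 -> exp x <= 3.
Proof. intros. pose proof exp_le_3. destruct (Req_dec x 1). subst; lra.
  pose proof (exp_increasing x 1). lra. Qed.

Lemma bnd_exp1 x : Rabs x <= 1 -> Rabs (exp x - 1) <= 3 * Rabs x.
Proof.
  intros. apply (mvt0 (fun x => exp x - 1) exp 3); auto.
  - intros y. apply is_derive_Reals. auto_derive; auto; ring.
  - rewrite exp_0; ring.
  - intros y Hy. rewrite Rabs_right. apply exp_le3. revert Hy; split_Rabs; lra.
    left; apply exp_pos.
Qed.

Lemma bnd_exp2 x : Rabs x <= 1 -> Rabs (exp x - 1 - x) <= 3 * x ^ 2.
Proof.
  intros. apply (mvt1 (fun x => exp x - 1 - x) (fun x => exp x - 1) 3); auto.
  - intros y. apply is_derive_Reals. auto_derive; auto; ring.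
  - rewrite exp_0; ring.
  - intros y Hy. apply bnd_exp1; auto.
Qed.

Lemma bnd_sin1 x : Rabs (sin x) <= Rabs x.
Proof.
  destruct (MVT_abs sin cos 0 x (fun c _ => derivable_pt_lim_sin c)) as [c [Hc _]].
  rewrite sin_0, !Rminus_0_r in Hc. rewrite Hc.
  pose proof (COS_bound c). rewrite <- (Rmult_1_l (Rabs x)) at 2.
  apply Rmult_le_compat_r. apply Rabs_pos. apply Rabs_le; lra.
Qed.

Lemma bnd_cos x : Rabs x <= 1 -> Rabs (cos x - 1) <= x ^ 2.
Proof.
  intros. rewrite <- (Rmult_1_l (x ^ 2)).
  apply (mvt1 (fun x => cos x - 1) (fun x => - sin x) 1); auto.
  - intros y. apply is_derive_Reals. auto_derive; auto; ring.
  - rewrite cos_0; ring.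
  - intros y Hy. rewrite Rabs_Ropp, Rmult_1_l. apply bnd_sin1.
Qed.

Lemma bnd_sin2 x : Rabs x <= 1 -> Rabs (sin x - x) <= x ^ 2.
Proof.
  intros. rewrite <- (Rmult_1_l (x ^ 2)).
  apply (mvt1 (fun x => sin x - x) (fun x => cos x - 1) 1); auto.
  - intros y. apply is_derive_Reals. auto_derive; auto; ring.
  - rewrite sin_0; ring.
  - intros y Hy. rewrite Rmult_1_l. eapply Rle_trans. apply bnd_cos; auto.
    replace (y ^ 2) with (Rabs y * Rabs y). 2:{ rewrite <- Rabs_mult, Rabs_right. ring. nra. }
    pose proof (Rabs_pos y). nra.
Qed.

Lemma Cmod_le_sum (x : C) : Cmod x <= 2 * (Rabs (fst x) + Rabs (snd x)).
Proof.
  eapply Rle_trans. apply Cmod_2Rmax.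
  assert (sqrt 2 <= 2). { rewrite <- (sqrt_square 2) at 2 by lra. apply sqrt_le_1_alt. lra. }
  pose proof (Rabs_pos (fst x)). pose proof (Rabs_pos (snd x)).
  assert (Rmax (Rabs (fst x)) (Rabs (snd x)) <= Rabs (fst x) + Rabs (snd x)) by (unfold Rmax; destruct Rle_dec; lra).
  assert (0 <= Rmax (Rabs (fst x)) (Rabs (snd x))) by (unfold Rmax; destruct Rle_dec; lra).
  nra.
Qed.

Lemma cexp_add a b : cexp (a + b) = (cexp a * cexp b)%C.
Proof.
  destruct a as [a1 a2], b as [b1 b2]. unfold cexp, Cplus, Cmult; simpl.
  rewrite exp_plus, cos_plus, sin_plus. f_equal; ring.
Qed.

Lemma cexp_bound h : Cmod h <= 1 -> Cmod (cexp h - 1 - h) <= 20 * Cmod h ^ 2.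
Proof.
  intros Hh. destruct h as [a b].
  pose proof (Rmax_Cmod (a, b)) as Hm. simpl in Hm.
  assert (Ha : Rabs a <= 1) by (eapply Rle_trans; [|exact Hh]; eapply Rle_trans; [apply Rmax_l|exact Hm]).
  assert (Hb : Rabs b <= 1) by (eapply Rle_trans; [|exact Hh]; eapply Rle_trans; [apply Rmax_r|exact Hm]).
  rewrite Cmod2_alt. simpl.
  eapply Rle_trans. apply Cmod_le_sum. unfold cexp. simpl.
  replace (exp a * cos b + - (1) + - a) with ((exp a - 1 - a) + exp a * (cos b - 1)) by ring.
  replace (exp a * sin b + - 0 + - b) with ((exp a - 1) * sin b + (sin b - b)) by ring.
  pose proof (bnd_exp1 a Ha). pose proof (bnd_exp2 a Ha). pose proof (bnd_cos b Hb).
  pose proof (bnd_sin1 b). pose proof (bnd_sin2 b Hb).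
  assert (Hea : exp a <= 3) by (apply exp_le3; revert Ha; split_Rabs; lra).
  pose proof (exp_pos a).
  assert (R1 : Rabs (exp a - 1 - a + exp a * (cos b - 1)) <= 3 * a ^ 2 + 3 * b ^ 2).
  { eapply Rle_trans. apply Rabs_triang. rewrite Rabs_mult, (Rabs_right (exp a)) by lra.
    pose proof (Rabs_pos (cos b - 1)). nra. }
  assert (R2 : Rabs ((exp a - 1) * sin b + (sin b - b)) <= 3 * (Rabs a * Rabs b) + b ^ 2).
  { eapply Rle_trans. apply Rabs_triang. rewrite Rabs_mult.
    pose proof (Rabs_pos (exp a - 1)). pose proof (Rabs_pos (sin b)). pose proof (Rabs_pos a). nra. }
  assert (Rabs a * Rabs b <= a ^ 2 + b ^ 2).
  { replace (a ^ 2) with (Rabs a * Rabs a). replace (b ^ 2) with (Rabs b * Rabs b).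
    pose proof (Rabs_pos a). pose proof (Rabs_pos b). nra.
    rewrite <- Rabs_mult, Rabs_right; [ring|nra]. rewrite <- Rabs_mult, Rabs_right; [ring|nra]. }
  assert (0 <= a ^ 2) by nra. assert (0 <= b ^ 2) by nra.
  replace (a * (a * 1) + b * (b * 1)) with (a^2+b^2) by ring. nra.
Qed.


Lemma is_derive_quad (f : C -> C) z l d0 M : 0 < d0 -> 0 <= M ->
  (forall w, Cmod (w - z) < d0 -> Cmod (f w - f z - (w - z) * l) <= M * Cmod (w - z) ^ 2) ->
  @is_derive C_AbsRing C_NormedModule f z l.
Proof.
  intros Hd0 HM H. apply is_derive_bound. intros eps Heps.
  exists (Rmin d0 (eps / (M + 1))). split.
  { apply Rmin_pos; auto. apply Rdiv_lt_0_compat; lra. }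
  intros w Hw. eapply Rle_trans. apply H. eapply Rlt_le_trans. exact Hw. apply Rmin_l.
  pose proof (Cmod_ge_0 (w - z)).
  assert (Cmod (w - z) <= eps / (M + 1)) by (left; eapply Rlt_le_trans; [exact Hw|apply Rmin_r]).
  assert (M * Cmod (w - z) <= eps).
  { apply Rle_trans with ((M+1) * (eps / (M+1))). nra. field_simplify; lra. }
  simpl. nra.
Qed.

Lemma is_derive_cexp z : @is_derive C_AbsRing C_NormedModule cexp z (cexp z).
Proof.
  apply (is_derive_quad _ _ _ 1 (Cmod (cexp z) * 20)). lra.
  pose proof (Cmod_ge_0 (cexp z)). lra.
  intros w Hw. replace w with (z + (w - z))%C at 1 by ring.
  rewrite cexp_add.
  replace (cexp z * cexp (w - z) - cexp z - (w - z) * cexp z)%C with (cexp z * (cexp (w - z) - 1 - (w - z)))%C by ring.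
  rewrite Cmod_mult. rewrite Rmult_assoc. apply Rmult_le_compat_l. apply Cmod_ge_0.
  apply cexp_bound. lra.
Qed.


Lemma lim_ratio : is_lim_seq (fun n => 1 + / INR (S n)) 1.
Proof.
  assert (H : is_lim_seq (fun n => 1 + / INR (S n)) (1 + 0)).
  2:{ rewrite Rplus_0_r in H. exact H. }
  apply is_lim_seq_plus'. apply is_lim_seq_const.
  apply (is_lim_seq_incr_1 (fun n => / INR n) 0).
  replace (Finite 0) with (Rbar_inv p_infty) by reflexivity.
  apply is_lim_seq_inv. apply is_lim_seq_INR. discriminate.
Qed.

Lemma lim_pow (u : nat -> R) (l : R) K : is_lim_seq u l -> is_lim_seq (fun n => u n ^ K) (l ^ K).
Proof.
  intros H. induction K.
  - apply is_lim_seq_const.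
  - simpl. apply (is_lim_seq_mult' u (fun n => u n ^ K)). exact H. exact IHK.
Qed.

Lemma ex_series_poly_geom K r : 0 <= r < 1 -> ex_series (fun j => INR (S j) ^ K * r ^ j).
Proof.
  intros Hr.
  set (r' := (1 + r) / 2).
  assert (Hr' : 0 < r' < 1) by (unfold r'; lra).
  apply (ex_series_le (V := R_CompleteNormedModule) _ (fun j => Rabs (INR (S j) ^ K * r' ^ j))).
  - intros n. change (norm (INR (S n) ^ K * r ^ n)) with (Rabs (INR (S n) ^ K * r ^ n)).
    rewrite !Rabs_mult.
    apply Rmult_le_compat_l. apply Rabs_pos. rewrite <- !RPow_abs.
    apply pow_incr. split. apply Rabs_pos. rewrite (Rabs_right r) by lra. rewrite (Rabs_right r') by lra. unfold r'; lra.
  - apply (ex_series_DAlembert _ r'). lra.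
    + intros n. apply Rmult_integral_contrapositive. split. apply pow_nonzero.
      apply not_0_INR; lia. apply pow_nonzero; lra.
    + replace r' with (1 ^ K * r') at 1 by (rewrite pow1; ring).
      apply is_lim_seq_ext with (fun n => (1 + / INR (S n)) ^ K * r').
      * intros n. rewrite Rabs_right.
        { replace (INR (S (S n))) with (INR (S n) * (1 + / INR (S n))).
          rewrite Rpow_mult_distr. simpl (r' ^ S n). field. split. apply pow_nonzero; lra.
          apply pow_nonzero. apply not_0_INR; lia.
          rewrite (S_INR (S n)). field. apply not_0_INR; lia. }
        assert (0 < INR (S n)) by (apply lt_0_INR; lia).
        assert (0 < INR (S (S n))) by (apply lt_0_INR; lia).
        apply Rle_ge. unfold Rdiv. apply Rmult_le_pos. apply Rmult_le_pos; apply pow_le; lra.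
        left. apply Rinv_0_lt_compat. apply Rmult_lt_0_compat; apply pow_lt; lra.
      * apply is_lim_seq_mult'. apply lim_pow. apply lim_ratio. apply is_lim_seq_const.
Qed.


Definition csum (b : nat -> C) := ex_series (fun n => Cmod (b n)).

Lemma exR_scal (c : R) (a : nat -> R) : ex_series a -> ex_series (fun n => c * a n).
Proof. intros H. apply (@ex_series_scal_l R_AbsRing R_NormedModule c a H). Qed.

Lemma exR_plus (a b : nat -> R) : ex_series a -> ex_series b -> ex_series (fun n => a n + b n).
Proof. intros H H'. apply (@ex_series_plus R_AbsRing R_NormedModule a b H H'). Qed.

Lemma csum_Re b : csum b -> ex_series (fun n => Re (b n)).
Proof.
  intros H. apply ex_series_Rabs.
  apply (ex_series_le (V := R_CompleteNormedModule) _ (fun n => Cmod (b n))); auto.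
  intros n. change (norm (Rabs (Re (b n)))) with (Rabs (Rabs (Re (b n)))).
  rewrite Rabs_Rabsolu. apply re_le_Cmod.
Qed.

Lemma im_le_Cmod (c : C) : Rabs (Im c) <= Cmod c.
Proof. eapply Rle_trans. 2: apply (Rmax_Cmod c). apply Rmax_r. Qed.

Lemma csum_Im b : csum b -> ex_series (fun n => Im (b n)).
Proof.
  intros H. apply ex_series_Rabs.
  apply (ex_series_le (V := R_CompleteNormedModule) _ (fun n => Cmod (b n))); auto.
  intros n. change (norm (Rabs (Im (b n)))) with (Rabs (Rabs (Im (b n)))).
  rewrite Rabs_Rabsolu. apply im_le_Cmod.
Qed.

Lemma csum_le b (c : nat -> R) : (forall n, Cmod (b n) <= c n) -> ex_series c -> csum b.
Proof.
  intros H Hc. apply (ex_series_le (V := R_CompleteNormedModule) _ c); auto.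
  intros n. change (norm (Cmod (b n))) with (Rabs (Cmod (b n))).
  rewrite Rabs_right. apply H. apply Rle_ge, Cmod_ge_0.
Qed.

Lemma CSeries_ext b c : (forall n, b n = c n) -> CSeries b = CSeries c.
Proof. intros H. unfold CSeries. f_equal; apply Series_ext; intros; rewrite H; auto. Qed.

Lemma CSeries_plus b c : csum b -> csum c -> CSeries (fun n => b n + c n)%C = (CSeries b + CSeries c)%C.
Proof.
  intros Hb Hc. unfold CSeries, Cplus. simpl. f_equal.
  - rewrite <- Series_plus. apply Series_ext; intros; reflexivity. apply csum_Re; auto. apply csum_Re; auto.
  - rewrite <- Series_plus. apply Series_ext; intros; reflexivity. apply csum_Im; auto. apply csum_Im; auto.
Qed.

Lemma CSeries_scal k b : csum b -> CSeries (fun n => k * b n)%C = (k * CSeries b)%C.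
Proof.
  intros Hb. unfold CSeries, Cmult. simpl. f_equal.
  - rewrite <- !Series_scal_l, <- Series_minus. apply Series_ext; intros; reflexivity.
    apply exR_scal, csum_Re; auto. apply exR_scal, csum_Im; auto.
  - rewrite <- !Series_scal_l, <- Series_plus. apply Series_ext; intros; reflexivity.
    apply exR_scal, csum_Im; auto. apply exR_scal, csum_Re; auto.
Qed.

Lemma csum_plus b c : csum b -> csum c -> csum (fun n => b n + c n)%C.
Proof.
  intros Hb Hc. apply csum_le with (fun n => Cmod (b n) + Cmod (c n)).
  intros; apply Cmod_triangle. apply exR_plus; auto.
Qed.

Lemma csum_scal k b : csum b -> csum (fun n => k * b n)%C.
Proof.
  intros Hb. apply csum_le with (fun n => Cmod k * Cmod (b n)).
  intros; rewrite Cmod_mult; lra. apply exR_scal; auto.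
Qed.

Lemma CSeries_minus b c : csum b -> csum c -> CSeries (fun n => b n - c n)%C = (CSeries b - CSeries c)%C.
Proof.
  intros Hb Hc. unfold Cminus.
  rewrite (CSeries_ext _ (fun n => b n + (-1) * c n)%C). rewrite CSeries_plus, CSeries_scal; auto.
  ring. apply csum_scal; auto. intros; ring.
Qed.

Lemma csum_minus b c : csum b -> csum c -> csum (fun n => b n - c n)%C.
Proof.
  intros Hb Hc. eapply csum_le. 2: apply exR_plus; [exact Hb | exact Hc].
  intros n. simpl. unfold Cminus. eapply Rle_trans. apply Cmod_triangle. rewrite Cmod_opp. lra.
Qed.

Lemma csum_absRe b : csum b -> ex_series (fun n => Rabs (Re (b n))).
Proof.
  intros H. apply (ex_series_le (V := R_CompleteNormedModule) _ (fun n => Cmod (b n))); auto.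
  intros n. change (norm (Rabs (Re (b n)))) with (Rabs (Rabs (Re (b n)))).
  rewrite Rabs_Rabsolu. apply re_le_Cmod.
Qed.

Lemma csum_absIm b : csum b -> ex_series (fun n => Rabs (Im (b n))).
Proof.
  intros H. apply (ex_series_le (V := R_CompleteNormedModule) _ (fun n => Cmod (b n))); auto.
  intros n. change (norm (Rabs (Im (b n)))) with (Rabs (Rabs (Im (b n)))).
  rewrite Rabs_Rabsolu. apply im_le_Cmod.
Qed.

Lemma Cmod_le_sum' (x : C) : Cmod x <= 2 * (Rabs (fst x) + Rabs (snd x)).
Proof.
  eapply Rle_trans. apply Cmod_2Rmax.
  assert (sqrt 2 <= 2). { rewrite <- (sqrt_square 2) at 2 by lra. apply sqrt_le_1_alt. lra. }
  pose proof (Rabs_pos (fst x)). pose proof (Rabs_pos (snd x)).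
  assert (Rmax (Rabs (fst x)) (Rabs (snd x)) <= Rabs (fst x) + Rabs (snd x)) by (unfold Rmax; destruct Rle_dec; lra).
  assert (0 <= Rmax (Rabs (fst x)) (Rabs (snd x))) by (unfold Rmax; destruct Rle_dec; lra).
  nra.
Qed.

Lemma CSeries_bound b (c : nat -> R) : (forall n, Cmod (b n) <= c n) -> ex_series c ->
  Cmod (CSeries b) <= 4 * Series c.
Proof.
  intros H Hc. assert (Hb : csum b) by (eapply csum_le; eauto).
  eapply Rle_trans. apply Cmod_le_sum'. unfold CSeries; simpl.
  assert (Rabs (Series (fun n => Re (b n))) <= Series c).
  { eapply Rle_trans. apply Series_Rabs. apply csum_absRe; auto.
    apply Series_le; auto. intros n; split. apply Rabs_pos. eapply Rle_trans. apply re_le_Cmod. auto. }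
  assert (Rabs (Series (fun n => Im (b n))) <= Series c).
  { eapply Rle_trans. apply Series_Rabs. apply csum_absIm; auto.
    apply Series_le; auto. intros n; split. apply Rabs_pos. eapply Rle_trans. apply im_le_Cmod. auto. }
  lra.
Qed.


Lemma E_bound (w w0 : C) r k : 0 < r -> Cmod w <= r -> Cmod w0 <= r ->
  r ^ 2 * Cmod (Cpow w (S k) - Cpow w0 (S k) - RtoC (INR (S k)) * (w - w0) * Cpow w0 k)%C
  <= INR (S k) ^ 2 * r ^ (S k) * Cmod (w - w0) ^ 2.
Proof.
  intros Hr Hw Hw0. induction k.
  - replace (Cpow w 1 - Cpow w0 1 - RtoC (INR 1) * (w - w0) * Cpow w0 0)%C with (RtoC 0).
    rewrite Cmod_0. pose proof (Cmod_ge_0 (w - w0)). simpl. nra.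
    simpl. unfold RtoC. apply injective_projections; simpl; ring.
  - set (h := (w - w0)%C) in *.
    replace (Cpow w (S (S k)) - Cpow w0 (S (S k)) - RtoC (INR (S (S k))) * h * Cpow w0 (S k))%C
      with (w * (Cpow w (S k) - Cpow w0 (S k) - RtoC (INR (S k)) * h * Cpow w0 k)
            + RtoC (INR (S k)) * (h * h) * Cpow w0 k)%C.
    2:{ unfold h. rewrite (S_INR (S k)). simpl Cpow. rewrite RtoC_plus. ring. }
    set (E := (Cpow w (S k) - Cpow w0 (S k) - RtoC (INR (S k)) * h * Cpow w0 k)%C) in *.
    assert (HE : Cmod (w * E + RtoC (INR (S k)) * (h * h) * Cpow w0 k)%C <=
                 r * Cmod E + INR (S k) * Cmod h ^ 2 * r ^ k).
    { eapply Rle_trans. apply Cmod_triangle. rewrite !Cmod_mult, Cmod_pow, Cmod_R.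
      rewrite Rabs_right by (apply Rle_ge, pos_INR).
      pose proof (Cmod_ge_0 E). pose proof (Cmod_ge_0 h). pose proof (pos_INR (S k)).
      pose proof (Cmod_ge_0 w0).
      assert (Cmod w0 ^ k <= r ^ k) by (apply pow_incr; lra).
      assert (0 <= Cmod w0 ^ k) by (apply pow_le; lra).
      apply Rplus_le_compat. nra.
      replace (INR (S k) * Cmod h ^ 2 * r ^ k) with ((INR (S k) * (Cmod h * Cmod h)) * r ^ k) by ring.
      apply Rmult_le_compat_l; auto. apply Rmult_le_pos; nra. }
    pose proof (Cmod_ge_0 E). pose proof (Cmod_ge_0 h). pose proof (pos_INR (S k)).
    assert (0 <= r ^ k) by (apply pow_le; lra).
    apply Rle_trans with (r ^ 2 * (r * Cmod E + INR (S k) * Cmod h ^ 2 * r ^ k)).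
    apply Rmult_le_compat_l; auto. nra.
    rewrite (S_INR (S k)).
    assert (0 <= Cmod h ^ 2) by nra.
    assert (0 <= r ^ S (S k) * Cmod h ^ 2) by (apply Rmult_le_pos; auto; apply pow_le; lra).
    replace (r ^ 2 * (r * Cmod E + INR (S k) * Cmod h ^ 2 * r ^ k)) with
      (r * (r ^ 2 * Cmod E) + INR (S k) * (r ^ S (S k) * Cmod h ^ 2)) by (simpl; ring).
    apply Rle_trans with (r * (INR (S k) ^ 2 * r ^ S k * Cmod h ^ 2) + INR (S k) * (r ^ S (S k) * Cmod h ^ 2)).
    apply Rplus_le_compat_r. apply Rmult_le_compat_l; lra.
    replace (r * (INR (S k) ^ 2 * r ^ S k * Cmod h ^ 2)) with (INR (S k) ^ 2 * (r ^ S (S k) * Cmod h ^ 2)) by (simpl; ring).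
    replace ((INR (S k) + 1) ^ 2 * r ^ S (S k) * Cmod h ^ 2) with ((INR (S k) + 1) ^ 2 * (r ^ S (S k) * Cmod h ^ 2)) by ring.
    nra.
Qed.


Definition pser (a : nat -> C) (w : C) : C := CSeries (fun j => a j * Cpow w (S j))%C.
Definition goodc (a : nat -> C) := exists K Cst, forall j, Cmod (a j) <= Cst * INR (S j) ^ K.

Lemma goodc_Cst a K Cst : (forall j, Cmod (a j) <= Cst * INR (S j) ^ K) -> 0 <= Cst.
Proof.
  intros H. specialize (H 0%nat). simpl in H. rewrite pow1 in H. pose proof (Cmod_ge_0 (a 0%nat)). lra.
Qed.

Lemma csum_pow a K Cst r (w : C) k : (forall j, Cmod (a j) <= Cst * INR (S j) ^ K) -> 0 <= r < 1 -> Cmod w <= r ->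
  csum (fun j => a j * RtoC (INR (S j) ^ k) * Cpow w j)%C.
Proof.
  intros Ha Hr Hw. pose proof (goodc_Cst _ _ _ Ha).
  apply csum_le with (fun j => Cst * (INR (S j) ^ (K + k) * r ^ j)).
  - intros j. rewrite !Cmod_mult, Cmod_pow, Cmod_R, Rabs_right.
    2: apply Rle_ge, pow_le, pos_INR.
    rewrite pow_add. 
    assert (Cmod w ^ j <= r ^ j) by (apply pow_incr; split; [apply Cmod_ge_0|auto]).
    assert (0 <= Cmod w ^ j) by (apply pow_le, Cmod_ge_0).
    assert (0 <= INR (S j) ^ k) by (apply pow_le, pos_INR).
    assert (0 <= INR (S j) ^ K) by (apply pow_le, pos_INR).
    specialize (Ha j). pose proof (Cmod_ge_0 (a j)).
    apply Rle_trans with ((Cst * INR (S j) ^ K) * INR (S j) ^ k * Cmod w ^ j).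
    apply Rmult_le_compat_r; auto. apply Rmult_le_compat_r; auto.
    replace (Cst * (INR (S j) ^ K * INR (S j) ^ k * r ^ j)) with ((Cst * INR (S j) ^ K) * INR (S j) ^ k * r ^ j) by ring.
    apply Rmult_le_compat_l; auto. apply Rmult_le_pos; auto. apply Rmult_le_pos; auto.
  - apply exR_scal. apply ex_series_poly_geom. auto.
Qed.

Lemma pser_deriv a w0 : goodc a -> Cmod w0 < 1 ->
  @is_derive C_AbsRing C_NormedModule (pser a) w0 (CSeries (fun j => a j * RtoC (INR (S j)) * Cpow w0 j))%C.
Proof.
  intros [K [Cst Ha]] Hw0.
  pose proof (goodc_Cst _ _ _ Ha) as HC.
  pose proof (Cmod_ge_0 w0).
  set (r := (1 + Cmod w0) / 2).
  assert (Hr : 1/2 <= r < 1) by (unfold r; lra).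
  set (M := 8 * Cst * Series (fun j => INR (S j) ^ (K + 2) * r ^ j)).
  assert (HS : 0 <= Series (fun j => INR (S j) ^ (K + 2) * r ^ j)).
  { assert (Z : Series (fun _ : nat => 0) = 0).
    { transitivity (Series (fun n : nat => 0 * 0)). apply Series_ext; intros; ring.
      rewrite (Series_scal_l 0 (fun _ => 0)). ring. }
    rewrite <- Z. apply Series_le. intros n; split. lra. apply Rmult_le_pos. apply pow_le, pos_INR. apply pow_le; lra.
    apply ex_series_poly_geom; lra. }
  apply (is_derive_quad _ _ _ ((1 - Cmod w0) / 2) M). lra. unfold M. 
  apply Rmult_le_pos; auto. lra.
  intros w Hw.
  assert (Hwr : Cmod w <= r).
  { replace w with (w0 + (w - w0))%C by ring. eapply Rle_trans. apply Cmod_triangle. unfold r; lra. }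
  assert (Hw0r : Cmod w0 <= r) by (unfold r; lra).
  assert (S1 : forall v, Cmod v <= r -> csum (fun j => a j * Cpow v (S j))%C).
  { intros v Hv. pose proof (csum_pow a K Cst r v 0 Ha ltac:(lra) Hv) as H1.
    apply csum_le with (fun j => Cmod (a j * RtoC (INR (S j) ^ 0) * Cpow v j)%C); auto.
    intros j. simpl Cpow. rewrite !Cmod_mult. simpl pow. rewrite Cmod_1, Rmult_1_r.
    pose proof (Cmod_ge_0 (a j)). pose proof (Cmod_ge_0 (Cpow v j)). pose proof (Cmod_ge_0 v).
    apply Rmult_le_compat_l; auto. rewrite <- (Rmult_1_l (Cmod (Cpow v j))) at 2.
    apply Rmult_le_compat_r; auto. lra. }
  assert (S2 : csum (fun j => a j * RtoC (INR (S j)) * Cpow w0 j)%C).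
  { pose proof (csum_pow a K Cst r w0 1 Ha ltac:(lra) Hw0r) as H1.
    eapply csum_le; [|exact H1]. intros j. simpl. rewrite Rmult_1_r. lra. }
  unfold pser.
  rewrite <- CSeries_minus, <- CSeries_scal, <- CSeries_minus; auto.
  2:{ apply csum_minus; auto. }
  2:{ apply csum_scal; auto. }
  rewrite (CSeries_ext _ (fun j => a j * (Cpow w (S j) - Cpow w0 (S j) - RtoC (INR (S j)) * (w - w0) * Cpow w0 j))%C).
  2:{ intros j. ring. }
  eapply Rle_trans. apply CSeries_bound with (c := fun j => (2 * Cst * Cmod (w - w0) ^ 2) * (INR (S j) ^ (K + 2) * r ^ j)).
  - intros j. rewrite Cmod_mult.
    pose proof (E_bound w w0 r j ltac:(lra) Hwr Hw0r) as HE.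
    set (E := Cmod (Cpow w (S j) - Cpow w0 (S j) - RtoC (INR (S j)) * (w - w0) * Cpow w0 j)%C) in *.
    assert (HE2 : E <= 2 * INR (S j) ^ 2 * r ^ j * Cmod (w - w0) ^ 2).
    { assert (0 < r ^ 2) by (apply pow_lt; lra).
      apply Rmult_le_reg_l with (r ^ 2); auto. eapply Rle_trans. exact HE.
      replace (r ^ 2 * (2 * INR (S j) ^ 2 * r ^ j * Cmod (w - w0) ^ 2)) with
        ((INR (S j) ^ 2 * r ^ j * Cmod (w - w0) ^ 2) * (2 * r ^ 2)) by ring.
      replace (INR (S j) ^ 2 * r ^ S j * Cmod (w - w0) ^ 2) with
        ((INR (S j) ^ 2 * r ^ j * Cmod (w - w0) ^ 2) * r) by (simpl; ring).
      apply Rmult_le_compat_l. apply Rmult_le_pos. apply Rmult_le_pos; apply pow_le; [apply pos_INR|lra].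
      apply pow_le, Cmod_ge_0. simpl; nra. }
    specialize (Ha j). pose proof (Cmod_ge_0 (a j)).
    assert (0 <= E) by apply Cmod_ge_0.
    apply Rle_trans with ((Cst * INR (S j) ^ K) * (2 * INR (S j) ^ 2 * r ^ j * Cmod (w - w0) ^ 2)).
    apply Rmult_le_compat; auto.
    rewrite pow_add. right; ring.
  - apply exR_scal. apply ex_series_poly_geom. lra.
  - rewrite Series_scal_l. unfold M. right. ring.
Qed.

Lemma isd_CC1 f z l : @is_derive C_AbsRing C_NormedModule f z l -> @is_derive C_AbsRing (AbsRing_NormedModule C_AbsRing) f z l.
Proof. intros [H1 H2]. split.
 - destruct H1 as [A B [M HM]]. split; auto. exists M. exact HM.
 - intros x Hx eps. exact (H2 x Hx eps).
Qed.
Lemma isd_CC2 f z l : @is_derive C_AbsRing (AbsRing_NormedModule C_AbsRing) f z l -> @is_derive C_AbsRing C_NormedModule f z l.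
Proof. intros [H1 H2]. split.
 - destruct H1 as [A B [M HM]]. split; auto. exists M. exact HM.
 - intros x Hx eps. exact (H2 x Hx eps).
Qed.

Notation isd := (@is_derive C_AbsRing C_NormedModule).

Lemma isd_mult (f g : C -> C) z df dg : isd f z df -> isd g z dg ->
  isd (fun x => f x * g x)%C z (df * g z + f z * dg)%C.
Proof. intros. apply isd_CC2. apply (is_derive_mult f g z df dg); try apply isd_CC1; auto. intros; apply Cmult_comm. Qed.

Lemma isd_plus (f g : C -> C) z df dg : isd f z df -> isd g z dg ->
  isd (fun x => f x + g x)%C z (df + dg)%C.
Proof. intros. apply (is_derive_plus f g z df dg); auto. Qed.

Lemma isd_const (c : C) z : isd (fun _ => c) z (RtoC 0).
Proof. apply (is_derive_const c z). Qed.

Lemma isd_lin (c : C) z : isd (fun x => c * x)%C z c.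
Proof.
  apply (is_derive_quad _ _ _ 1 0). lra. lra. intros w _.
  replace (c * w - c * z - (w - z) * c)%C with (RtoC 0) by ring. rewrite Cmod_0. simpl; lra.
Qed.

Lemma isd_comp (f g : C -> C) z df dg : isd f (g z) df -> isd g z dg -> isd (fun x => f (g x)) z (dg * df)%C.
Proof. intros. exact (is_derive_comp f g z df dg H (isd_CC1 _ _ _ H0)). Qed.

Definition tpi : C := (RtoC (2 * PI) * Ci)%C.

Lemma isd_qvar z : isd qvar z (tpi * qvar z)%C.
Proof.
  unfold qvar.
  apply (isd_comp cexp (fun x => RtoC (2 * PI) * (Ci * x))%C z).
  apply is_derive_cexp.
  eapply is_derive_ext. 2: apply (isd_lin tpi z). intros; unfold tpi; simpl; ring.
Qed.

Lemma Cmod_cexp w : Cmod (cexp w) = exp (Re w).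
Proof.
  unfold cexp, Cmod. cbn [fst snd].
  replace ((exp (Re w) * cos (Im w)) ^ 2 + (exp (Re w) * sin (Im w)) ^ 2) with (exp (Re w) ^ 2)
    by (pose proof (sin2_cos2 (Im w)) as HH; unfold Rsqr in HH; nra).
  apply sqrt_pow2. left; apply exp_pos.
Qed.

Lemma Cmod_qvar z : Cmod (qvar z) = exp (- (2 * PI) * Im z).
Proof. unfold qvar. rewrite Cmod_cexp. f_equal. unfold Re, Im; simpl. ring. Qed.

Lemma Cmod_qvar_lt z : upper_half z -> Cmod (qvar z) < 1.
Proof.
  intros H. unfold upper_half in H. rewrite Cmod_qvar. rewrite <- exp_0. apply exp_increasing.
  pose proof PI_RGT_0. nra.
Qed.

Definition dcoef (a : nat -> C) (j : nat) : C := (tpi * RtoC (INR (S j)) * a j)%C.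

Lemma goodc_dcoef a : goodc a -> goodc (dcoef a).
Proof.
  intros [K [Cst H]]. exists (S K), (Cst * Cmod tpi). intros j. unfold dcoef.
  rewrite !Cmod_mult, Cmod_R, Rabs_right by (apply Rle_ge, pos_INR).
  specialize (H j). pose proof (Cmod_ge_0 tpi). pose proof (pos_INR (S j)).
  apply Rle_trans with (Cmod tpi * INR (S j) * (Cst * INR (S j) ^ K)).
  apply Rmult_le_compat_l; [apply Rmult_le_pos; auto|auto]. right. rewrite <- tech_pow_Rmult. ring.
Qed.

Lemma isd_atom a z : goodc a -> upper_half z -> isd (fun x => pser a (qvar x)) z (pser (dcoef a) (qvar z)).
Proof.
  intros Ha Hz.
  pose proof (Cmod_qvar_lt z Hz) as Hq.
  eapply is_derive_ext. intros; reflexivity.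
  replace (pser (dcoef a) (qvar z)) with ((tpi * qvar z) * CSeries (fun j => a j * RtoC (INR (S j)) * Cpow (qvar z) j))%C.
  apply (isd_comp (pser a) qvar). apply pser_deriv; auto. apply isd_qvar.
  destruct Ha as [K [Cst Ha]].
  rewrite <- CSeries_scal. unfold pser. apply CSeries_ext. intros j. unfold dcoef. simpl. ring.
  pose proof (csum_pow a K Cst (Cmod (qvar z)) (qvar z) 1 Ha) as H1.
  eapply csum_le. 2: apply H1; [split; [apply Cmod_ge_0|auto]|lra]. intros j. simpl. rewrite Rmult_1_r. lra.
Qed.


Inductive xexpr : Type :=
| XAtom (a : nat -> C) | XCst (c : C) | XAdd (e1 e2 : xexpr) | XMul (e1 e2 : xexpr).

Fixpoint ev (e : xexpr) (z : C) : C :=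
  match e with
  | XAtom a => pser a (qvar z)
  | XCst c => c
  | XAdd e1 e2 => (ev e1 z + ev e2 z)%C
  | XMul e1 e2 => (ev e1 z * ev e2 z)%C
  end.

Fixpoint dx (e : xexpr) : xexpr :=
  match e with
  | XAtom a => XAtom (dcoef a)
  | XCst _ => XCst (RtoC 0)
  | XAdd e1 e2 => XAdd (dx e1) (dx e2)
  | XMul e1 e2 => XAdd (XMul (dx e1) e2) (XMul e1 (dx e2))
  end.

Fixpoint wf (e : xexpr) : Prop :=
  match e with
  | XAtom a => goodc a
  | XCst _ => True
  | XAdd e1 e2 => wf e1 /\ wf e2
  | XMul e1 e2 => wf e1 /\ wf e2
  end.

Lemma wf_dx e : wf e -> wf (dx e).
Proof.
  induction e; simpl; intuition. apply goodc_dcoef; auto.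
Qed.

Lemma ev_deriv e z : wf e -> upper_half z -> isd (ev e) z (ev (dx e) z).
Proof.
  intros He Hz. induction e; simpl in *.
  - apply isd_atom; auto.
  - apply isd_const.
  - destruct He. apply isd_plus; auto.
  - destruct He. apply isd_mult; auto.
Qed.

Fixpoint Pw (e : xexpr) (n : nat) : xexpr :=
  match n with O => XCst (RtoC 1) | S n => XMul e (Pw e n) end.

Lemma ev_Pw e n z : ev (Pw e n) z = Cpow (ev e z) n.
Proof. induction n; simpl; auto. rewrite IHn; auto. Qed.

Lemma wf_Pw e n : wf e -> wf (Pw e n).
Proof. induction n; simpl; auto. Qed.

Lemma ev_dx_Pw e n z : ev (dx (Pw e (S n))) z = (RtoC (INR (S n)) * Cpow (ev e z) n * ev (dx e) z)%C.
Proof.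
  induction n.
  - simpl. ring.
  - change (ev (dx (Pw e (S (S n)))) z) with (ev (dx e) z * ev (Pw e (S n)) z + ev e z * ev (dx (Pw e (S n))) z)%C.
    rewrite IHn, ev_Pw. rewrite (S_INR (S n)). rewrite RtoC_plus. simpl. ring.
Qed.

Lemma uh_locally z : upper_half z -> @locally (AbsRing_UniformSpace C_AbsRing) z upper_half.
Proof.
  intros H. exists (mkposreal (Im z) H). intros w Hw.
  change (Cmod (w - z) < Im z) in Hw. unfold upper_half.
  pose proof (im_le_Cmod (w - z)). unfold Im in *. simpl in H0. 
  revert H0 Hw; unfold Cminus, Cplus, Copp; simpl. split_Rabs; lra.
Qed.

Lemma cderiv_loc (f g : C -> C) z l : upper_half z -> (forall w, upper_half w -> f w = g w) -> isd g z l -> cderiv f z = l.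
Proof.
  intros Hz Hfg Hg. apply cderiv_eq.
  apply (is_derive_ext_loc g f). 
  assert (H := uh_locally z Hz). destruct H as [e He]. exists e. intros y Hy. symmetry. apply Hfg, He, Hy.
  exact Hg.
Qed.

Lemma isd_cont f p l : isd f p l -> forall e, 0 < e -> exists d, 0 < d /\ forall w, Cmod (w - p) < d -> Cmod (f w - f p) < e.
Proof.
  intros [_ Hd] e He.
  assert (Hl : is_filter_lim (@locally (AbsRing_UniformSpace C_AbsRing) p) p) by (intros P HP; exact HP).
  destruct (Hd p Hl (mkposreal 1 Rlt_0_1)) as [d0 Hd0].
  set (L := Cmod l).
  assert (0 <= L) by apply Cmod_ge_0.
  exists (Rmin d0 (e / (L + 2))). split.
  { apply Rmin_pos. apply cond_pos. apply Rdiv_lt_0_compat; lra. }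
  intros w Hw.
  assert (Hb : Cmod (w - p) < d0) by (eapply Rlt_le_trans; [exact Hw|apply Rmin_l]).
  specialize (Hd0 w Hb). simpl in Hd0.
  change (Cmod (f w - f p - (w - p) * l) <= 1 * Cmod (w - p)) in Hd0.
  replace (f w - f p)%C with ((f w - f p - (w - p) * l) + (w - p) * l)%C by ring.
  eapply Rle_lt_trans. apply Cmod_triangle. rewrite Cmod_mult. fold L.
  assert (Cmod (w - p) < e / (L + 2)) by (eapply Rlt_le_trans; [exact Hw|apply Rmin_r]).
  pose proof (Cmod_ge_0 (w - p)).
  assert (Cmod (w - p) * (L + 2) < e).
  { apply Rlt_le_trans with (e / (L + 2) * (L + 2)). apply Rmult_lt_compat_r; lra. right; field; lra. }
  nra.
Qed.


Lemma tpi_neq0 : tpi <> RtoC 0.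
Proof.
  intros H. unfold tpi in H. apply (f_equal snd) in H. simpl in H. pose proof PI_RGT_0. nra.
Qed.

Fixpoint Cj (k : R) (m : nat) (phi psi e2 : xexpr) (j : nat) : xexpr :=
  match j with
  | O => psi
  | S j => XAdd (XMul (XCst (Cdiv (RtoC (INR (m - j))) tpi)) (XMul (dx phi) (Cj k m phi psi e2 j)))
               (XMul phi (XAdd (XMul (XCst (/ tpi)%C) (dx (Cj k m phi psi e2 j)))
                             (XMul (XCst (RtoC (- ((k + 2 * INR j) / 12)))) (XMul e2 (Cj k m phi psi e2 j)))))
  end.

Lemma wf_Cj k m phi psi e2 j : wf phi -> wf psi -> wf e2 -> wf (Cj k m phi psi e2 j).
Proof.
  intros. induction j; simpl; auto. repeat split; auto; apply wf_dx; auto.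
Qed.

Lemma Serre_struct k m phi psi e2 (F : C -> C) :
  wf phi -> wf psi -> wf e2 -> (forall z, upper_half z -> ev e2 z = E2 z) ->
  (forall z, F z = (Cpow (ev phi z) m * ev psi z)%C) ->
  forall j, (j <= m)%nat -> forall z, upper_half z ->
  SerreIter k j F z = (Cpow (ev phi z) (m - j) * ev (Cj k m phi psi e2 j) z)%C.
Proof.
  intros Hphi Hpsi He2 HE2 HF j. induction j; intros Hj z Hz.
  - simpl. rewrite HF, Nat.sub_0_r. reflexivity.
  - simpl SerreIter. unfold Serre, qderiv.
    rewrite IHj by (auto; lia).
    set (G := XMul (Pw phi (m - j)) (Cj k m phi psi e2 j)).
    rewrite (cderiv_loc _ (ev G) z (ev (dx G) z) Hz).
    2:{ intros w Hw. rewrite IHj by (auto; lia). unfold G; simpl. rewrite ev_Pw. reflexivity. }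
    2:{ apply ev_deriv; auto. unfold G; simpl; split. apply wf_Pw; auto. apply wf_Cj; auto. }
    unfold G. simpl dx. 
    replace (m - j)%nat with (S (m - S j)) by lia.
    change (ev (XAdd (XMul (dx (Pw phi (S (m - S j)))) (Cj k m phi psi e2 j)) (XMul (Pw phi (S (m - S j))) (dx (Cj k m phi psi e2 j)))) z)
      with (ev (dx (Pw phi (S (m - S j)))) z * ev (Cj k m phi psi e2 j) z + ev (Pw phi (S (m - S j))) z * ev (dx (Cj k m phi psi e2 j)) z)%C.
    rewrite ev_dx_Pw, ev_Pw.
    cbn [Cj]. cbn [ev]. rewrite HE2 by auto.
    replace (m - j)%nat with (S (m - S j)) by lia.
    rewrite RtoC_opp. cbn [Cpow].
    fold tpi. generalize (Cpow (ev phi z) (m - S j)). intros P. field. apply tpi_neq0.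
Qed.


Lemma Cpow_add c a b : Cpow c (a + b) = (Cpow c a * Cpow c b)%C.
Proof. induction a; simpl. ring. rewrite IHa. ring. Qed.

Lemma Cpow_nz c n : c <> RtoC 0 -> Cpow c n <> RtoC 0.
Proof.
  intros H H'. apply (f_equal Cmod) in H'. rewrite Cmod_pow, Cmod_0 in H'.
  assert (0 < Cmod c) by (apply Cmod_gt_0; auto).
  pose proof (pow_lt _ n H0). lra.
Qed.

Lemma Cmult_nz a b : a <> RtoC 0 -> b <> RtoC 0 -> (a * b)%C <> RtoC 0.
Proof.
  intros Ha Hb H. apply (f_equal Cmod) in H. rewrite Cmod_mult, Cmod_0 in H.
  apply Cmod_gt_0 in Ha. apply Cmod_gt_0 in Hb. nra.
Qed.

Lemma fold_scal (x : C) (h : nat -> C) l :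
  fold_right Cplus (RtoC 0) (map (fun i => x * h i)%C l) = (x * fold_right Cplus (RtoC 0) (map h l))%C.
Proof. induction l; simpl. ring. rewrite IHl. ring. Qed.

Lemma fold_zero (h : nat -> C) l : (forall i, In i l -> h i = RtoC 0) -> fold_right Cplus (RtoC 0) (map h l) = RtoC 0.
Proof.
  induction l; simpl; auto. intros H. rewrite H, IHl by auto. ring.
Qed.

Lemma fold_isd (h : nat -> C -> C) l p : (forall i, In i l -> exists d, isd (h i) p d) ->
  exists d, isd (fun z => fold_right Cplus (RtoC 0) (map (fun i => h i z) l)) p d.
Proof.
  induction l; simpl; intros H.
  - exists (RtoC 0). apply isd_const.
  - destruct (H a (or_introl eq_refl)) as [d1 H1].
    destruct IHl as [d2 H2]. intros; apply H; auto.
    exists (d1 + d2)%C. apply isd_plus; auto.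
Qed.

Lemma Cj_p k m phi psi e2 p : ev phi p = RtoC 0 -> ev (dx phi) p <> RtoC 0 -> ev psi p <> RtoC 0 ->
  forall j, (j <= m)%nat -> ev (Cj k m phi psi e2 j) p <> RtoC 0.
Proof.
  intros H0 H1 H2 j. induction j; intros Hj; simpl; auto.
  rewrite H0. replace (RtoC 0 * _)%C with (RtoC 0) by ring. rewrite Cplus_0_r.
  apply Cmult_nz. apply Cmult_nz. 
  intros H. apply (f_equal Re) in H. simpl in H. apply not_0_INR in H; auto. lia.
  intros H. apply (f_equal Cmod) in H. rewrite Cmod_inv in H by apply tpi_neq0.
  rewrite Cmod_0 in H. assert (0 < Cmod tpi) by (apply Cmod_gt_0, tpi_neq0).
  pose proof (Rinv_0_lt_compat _ H3). lra.
  apply Cmult_nz; auto. apply IHj. lia.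
Qed.

Lemma main_abstract k m N phi psi e2 p (F : C -> C) (g : nat -> C -> C) :
  wf phi -> wf psi -> wf e2 -> (forall z, upper_half z -> ev e2 z = E2 z) ->
  (forall z, F z = (Cpow (ev phi z) m * ev psi z)%C) ->
  upper_half p -> ev phi p = RtoC 0 -> ev (dx phi) p <> RtoC 0 -> ev psi p <> RtoC 0 ->
  (forall i, (1 <= i <= N)%nat -> exists l, isd (g i) p l) ->
  (forall z, upper_half z -> Cplus (SerreIter k N F z)
         (fold_right Cplus (RtoC 0) (map (fun i => Cmult (g i z) (SerreIter k (N - i) F z)) (seq 1 N))) = RtoC 0) ->
  (N <= m)%nat -> False.
Proof.
  intros Hphi Hpsi He2 HE2 HF Hp Hz Hd Hpsi0 Hg Heq HN.
  set (Psi := fun z => (ev (Cj k m phi psi e2 N) z +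
       fold_right Cplus (RtoC 0) (map (fun i => g i z * Cpow (ev phi z) i * ev (Cj k m phi psi e2 (N - i)) z) (seq 1 N)))%C).
  assert (HE : forall z, upper_half z -> (Cpow (ev phi z) (m - N) * Psi z)%C = RtoC 0).
  { intros z Hz'. rewrite <- (Heq z Hz'). unfold Psi.
    rewrite (Serre_struct k m phi psi e2 F) by auto.
    rewrite Cmult_plus_distr_l. f_equal.
    rewrite <- fold_scal. f_equal. apply map_ext_in. intros i Hi. apply in_seq in Hi.
    rewrite (Serre_struct k m phi psi e2 F) by (auto; lia).
    replace (m - (N - i))%nat with ((m - N) + i)%nat by lia. rewrite Cpow_add. ring. }
  assert (HPsi_d : exists l, isd Psi p l).
  { destruct (fold_isd (fun i z => g i z * Cpow (ev phi z) i * ev (Cj k m phi psi e2 (N - i)) z)%C (seq 1 N) p) as [d2 H2].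
    - intros i Hi. apply in_seq in Hi. destruct (Hg i ltac:(lia)) as [l1 H1].
      eexists. apply isd_mult. apply isd_mult. exact H1.
      eapply is_derive_ext. intros; apply ev_Pw. apply ev_deriv; auto. apply wf_Pw; auto.
      apply ev_deriv; auto. apply wf_Cj; auto.
    - eexists. unfold Psi. apply isd_plus. apply ev_deriv; auto. apply wf_Cj; auto. exact H2. }
  assert (HPsi_p : Psi p = ev (Cj k m phi psi e2 N) p).
  { unfold Psi. rewrite fold_zero. ring. intros i Hi. apply in_seq in Hi.
    rewrite Hz. replace i with (S (i - 1)) by lia. simpl. ring. }
  assert (HC : Psi p <> RtoC 0) by (rewrite HPsi_p; apply Cj_p; auto).
  destruct HPsi_d as [l Hl].
  destruct (isd_cont _ _ _ Hl (Cmod (Psi p))) as [d1 [Hd1 Hc]]. apply Cmod_gt_0; auto.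
  set (d := Rmin d1 (Im p)).
  assert (Hdpos : 0 < d) by (apply Rmin_pos; auto).
  destruct (classic (exists w, Cmod (w - p) < d /\ ev phi w <> RtoC 0)) as [[w [Hw1 Hw2]] | Hno].
  - assert (Hwu : upper_half w).
    { unfold upper_half. pose proof (im_le_Cmod (w - p)).
      assert (Cmod (w - p) < Im p) by (eapply Rlt_le_trans; [exact Hw1|apply Rmin_r]).
      unfold upper_half in Hp. revert H H0; unfold Im, Cminus, Cplus, Copp; simpl. split_Rabs; lra. }
    specialize (HE w Hwu).
    assert (Psi w <> RtoC 0).
    { intros H0. assert (H1 : Cmod (w - p) < d1) by (eapply Rlt_le_trans; [exact Hw1|apply Rmin_l]).
      specialize (Hc w H1). rewrite H0 in Hc.
      replace (RtoC 0 - Psi p)%C with (- Psi p)%C in Hc by ring. rewrite Cmod_opp in Hc. lra. }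
    apply (Cmult_nz _ _ (Cpow_nz _ (m - N) Hw2) H HE).
  - apply Hd.
    assert (Hloc : isd (ev phi) p (RtoC 0)).
    { apply (is_derive_ext_loc (fun _ => RtoC 0)). 2: apply isd_const.
      exists (mkposreal d Hdpos). intros y Hy. simpl in Hy.
      destruct (Ceq_dec (ev phi y) (RtoC 0)) as [E|E]. auto.
      exfalso. apply Hno. exists y. split; auto. }
    pose proof (ev_deriv phi p Hphi Hp) as Hd2.
    rewrite <- (cderiv_eq _ _ _ Hd2). apply cderiv_eq. exact Hloc.
Qed.


Lemma fold_bound (f : nat -> R) M l : (forall d, In d l -> 0 <= f d <= M) ->
  0 <= fold_right Rplus 0 (map f l) <= INR (length l) * M.
Proof.
  induction l; cbn [map fold_right length]; intros H. simpl; lra.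
  destruct (H a (or_introl eq_refl)).
  assert (IH : 0 <= fold_right Rplus 0 (map f l) <= INR (length l) * M) by (apply IHl; intros; apply H; right; auto).
  rewrite (S_INR (length l)). lra.
Qed.

Lemma sigma_bound k n : 0 <= sigma k n <= INR n ^ (S k).
Proof.
  unfold sigma. pose proof (fold_bound (fun d => if Nat.eqb (n mod d) 0 then INR d ^ k else 0) (INR n ^ k) (seq 1 n)) as H.
  rewrite length_seq in H. simpl pow. apply H.
  intros d Hd. apply in_seq in Hd. destruct (Nat.eqb (n mod d) 0).
  split. apply pow_le, pos_INR. apply pow_incr. split. apply pos_INR. apply le_INR; lia.
  split. lra. apply pow_le, pos_INR.
Qed.

Lemma sigma_1 k : sigma k 1 = 1.
Proof. unfold sigma. simpl. rewrite pow1. ring. Qed.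

Lemma INR_S_le_pow2 j : INR (S j) <= 2 ^ j.
Proof.
  induction j. simpl; lra. rewrite S_INR. change (2 ^ S j) with (2 * 2 ^ j). assert (1 <= 2 ^ j) by (apply pow_R1_Rle; lra). lra.
Qed.

Lemma poly_le_exp K j : INR (S j) ^ K <= (2 ^ K) ^ j.
Proof.
  rewrite <- pow_mult, Nat.mul_comm, pow_mult. apply pow_incr. split. apply pos_INR. apply INR_S_le_pow2.
Qed.

Lemma goodc_sigma k : goodc (fun j => RtoC (sigma k (S j))).
Proof.
  exists (S k), 1. intros j. rewrite Cmod_R, Rabs_right. rewrite Rmult_1_l. apply sigma_bound.
  apply Rle_ge, sigma_bound.
Qed.

Definition eis_e (c : R) (k : nat) : xexpr :=
  XAdd (XCst 1%C) (XMul (XCst (RtoC c)) (XAtom (fun j => RtoC (sigma (k - 1) (S j))))).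

Lemma ev_eis c k z : ev (eis_e c k) z = Eis c k z.
Proof. reflexivity. Qed.

Lemma wf_eis c k : wf (eis_e c k).
Proof. simpl. repeat split. apply goodc_sigma. Qed.

Lemma ev_dx_eis c k z : ev (dx (eis_e c k)) z = (RtoC c * pser (dcoef (fun j => RtoC (sigma (k - 1) (S j)))) (qvar z))%C.
Proof. simpl. ring. Qed.


Lemma Series_geom_scal (K q : R) : Rabs q < 1 -> Series (fun j => K * q ^ j) = K / (1 - q).
Proof.
  intros H. rewrite Series_scal_l. erewrite is_series_unique. 2: apply is_series_geom; auto. unfold Rdiv. ring.
Qed.

Lemma ex_geom_scal (K q : R) : Rabs q < 1 -> ex_series (fun j => K * q ^ j).
Proof. intros H. apply exR_scal. exists (/ (1 - q)). apply is_series_geom; auto. Qed.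

Lemma geom_bound (c : nat -> R) B x : c 0%nat = 1 -> 1 <= B -> (forall j, Rabs (c j) <= B ^ j) -> Rabs x * B < 1 ->
  ex_series (fun j => c j * x ^ (S j)) /\
  Rabs (Series (fun j => c j * x ^ (S j)) - x) <= B * x ^ 2 / (1 - B * Rabs x).
Proof.
  intros H0 HB Hc Hx.
  set (q := B * Rabs x).
  assert (Hq0 : 0 <= q) by (unfold q; pose proof (Rabs_pos x); nra).
  assert (Hq : Rabs q < 1) by (rewrite Rabs_right by lra; unfold q; lra).
  assert (Hu : forall j, Rabs (c j * x ^ (S j)) <= Rabs x * q ^ j).
  { intros j. rewrite Rabs_mult, <- RPow_abs. unfold q. rewrite Rpow_mult_distr.
    change (Rabs x ^ S j) with (Rabs x * Rabs x ^ j).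
    specialize (Hc j). pose proof (Rabs_pos x). pose proof (pow_le (Rabs x) j H).
    apply Rle_trans with (B ^ j * (Rabs x * Rabs x ^ j)).
    apply Rmult_le_compat_r; auto. apply Rmult_le_pos; auto. right; ring. }
  assert (Hex : ex_series (fun j => c j * x ^ (S j))).
  { apply ex_series_Rabs. apply (ex_series_le (V := R_CompleteNormedModule) _ (fun j => Rabs x * q ^ j)).
    intros n. change (norm (Rabs (c n * x ^ S n))) with (Rabs (Rabs (c n * x ^ S n))). rewrite Rabs_Rabsolu. apply Hu.
    apply ex_geom_scal; auto. }
  split; auto.
  rewrite Series_incr_1 by auto. rewrite H0. simpl (x ^ 1). 
  replace (1 * (x * 1) + Series (fun k : nat => c (S k) * x ^ S (S k)) - x) with (Series (fun k : nat => c (S k) * x ^ S (S k))) by ring.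
  assert (Hu2 : forall j, Rabs (c (S j) * x ^ S (S j)) <= (B * x ^ 2) * q ^ j).
  { intros j. rewrite Rabs_mult, <- RPow_abs. specialize (Hc (S j)).
    replace (B * x ^ 2 * q ^ j) with (B ^ S j * Rabs x ^ S (S j)).
    apply Rmult_le_compat_r. apply pow_le, Rabs_pos. auto.
    unfold q. rewrite Rpow_mult_distr.
    replace (x ^ 2) with (Rabs x ^ 2) by (rewrite RPow_abs; apply Rabs_right; apply Rle_ge; nra).
    rewrite <- !tech_pow_Rmult. ring. }
  eapply Rle_trans. apply Series_Rabs.
  { apply (ex_series_le (V := R_CompleteNormedModule) _ (fun j => (B * x ^ 2) * q ^ j)).
    intros n. change (norm (Rabs (c (S n) * x ^ S (S n)))) with (Rabs (Rabs (c (S n) * x ^ S (S n)))). rewrite Rabs_Rabsolu. apply Hu2.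
    apply ex_geom_scal; auto. }
  rewrite <- (Series_geom_scal (B * x ^ 2) q Hq).
  apply Series_le. intros n; split. apply Rabs_pos. apply Hu2. apply ex_geom_scal; auto.
Qed.


Lemma Series_zero : Series (fun _ : nat => 0) = 0.
Proof.
  transitivity (Series (fun n : nat => 0 * 0)). apply Series_ext; intros; ring.
  rewrite (Series_scal_l 0 (fun _ => 0)). ring.
Qed.

Lemma pser_real (c : nat -> R) x : pser (fun j => RtoC (c j)) (RtoC x) = RtoC (Series (fun j => c j * x ^ (S j))).
Proof.
  unfold pser. rewrite (CSeries_ext _ (fun n => RtoC (c n * x ^ (S n)))).
  2:{ intros n. rewrite RtoC_mult, RtoC_pow. reflexivity. }
  unfold CSeries. apply injective_projections; simpl.
  - apply Series_ext. intros n. reflexivity.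
  - apply Series_zero.
Qed.

Lemma pser_dreal (c : nat -> R) x : goodc (fun j => RtoC (c j)) -> Rabs x < 1 ->
  pser (dcoef (fun j => RtoC (c j))) (RtoC x) = Cmult tpi (RtoC (Series (fun j => (INR (S j) * c j) * x ^ (S j)))).
Proof.
  intros [K [Cst Ha]] Hx.
  rewrite <- (pser_real (fun j => INR (S j) * c j)). unfold pser.
  rewrite <- CSeries_scal. apply CSeries_ext. intros j. unfold dcoef. rewrite RtoC_mult. ring.
  pose proof (csum_pow _ K Cst (Rabs x) (RtoC x) 1 Ha ltac:(split; [apply Rabs_pos|auto])) as H1.
  rewrite Cmod_R in H1. specialize (H1 (Rle_refl _)).
  apply csum_scal with (k := RtoC x) in H1.
  eapply csum_le. 2: exact H1. intros j. cbv beta. right. f_equal. rewrite RtoC_mult, pow_1. cbn [Cpow]. ring.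
Qed.

Lemma series_cont (c : nat -> R) sg t : goodc (fun j => RtoC (c j)) -> Rabs sg = 1 -> Rabs t < 1 ->
  continuity_pt (fun y => Series (fun j => c j * (sg * y) ^ (S j))) t.
Proof.
  intros Hg Hsg Ht.
  assert (Hw : Cmod (RtoC (sg * t)) < 1) by (rewrite Cmod_R, Rabs_mult, Hsg; lra).
  pose proof (pser_deriv _ _ Hg Hw) as Hd.
  unfold continuity_pt, continue_in, limit1_in, limit_in. simpl. unfold R_dist.
  intros eps Heps. destruct (isd_cont _ _ _ Hd eps Heps) as [d [Hd0 Hc]].
  exists d. split; auto. intros y [_ Hy].
  specialize (Hc (RtoC (sg * y))).
  rewrite !pser_real in Hc. rewrite <- !RtoC_minus, !Cmod_R in Hc. apply Hc.
  replace (sg * y - sg * t) with (sg * (y - t)) by ring.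
  rewrite Rabs_mult, Hsg. lra.
Qed.

Definition pt (x0 t : R) : C := (x0, - ln t / (2 * PI)).

Lemma qvar_pt x0 t : 0 < t -> qvar (pt x0 t) = (t * cos (2 * PI * x0), t * sin (2 * PI * x0)).
Proof.
  intros Ht. pose proof PI_RGT_0.
  unfold qvar, cexp, pt, Cmult, Ci, RtoC. simpl.
  replace (2 * PI * (0 * x0 - 1 * (- ln t / (2 * PI))) - 0 * (0 * (- ln t / (2 * PI)) + 1 * x0)) with (ln t) by (field; lra).
  replace (2 * PI * (0 * (- ln t / (2 * PI)) + 1 * x0) + 0 * (0 * x0 - 1 * (- ln t / (2 * PI)))) with (2 * PI * x0) by ring.
  rewrite exp_ln by auto. reflexivity.
Qed.

Lemma uh_pt x0 t : 0 < t < 1 -> upper_half (pt x0 t).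
Proof.
  intros Ht. unfold upper_half, pt, Im; simpl. pose proof PI_RGT_0.
  assert (ln t < 0) by (rewrite <- ln_1; apply ln_increasing; lra).
  unfold Rdiv. apply Rmult_lt_0_compat. lra. apply Rinv_0_lt_compat; lra.
Qed.

Lemma qvar_pt_half t : 0 < t -> qvar (pt (-1/2) t) = RtoC (- t).
Proof.
  intros Ht. rewrite qvar_pt by auto.
  replace (2 * PI * (-1/2)) with (- PI) by field.
  rewrite cos_neg, sin_neg, cos_PI, sin_PI. unfold RtoC. f_equal; ring.
Qed.

Lemma qvar_pt_zero t : 0 < t -> qvar (pt 0 t) = RtoC t.
Proof.
  intros Ht. rewrite qvar_pt by auto.
  replace (2 * PI * 0) with 0 by ring. rewrite cos_0, sin_0. unfold RtoC. f_equal; ring.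
Qed.


Lemma err_le B t b : 0 <= t <= b -> 0 <= B -> B * b < 1 -> B * t ^ 2 / (1 - B * t) <= (B * b / (1 - B * b)) * t.
Proof.
  intros Ht HB Hb.
  assert (HBt : B * t <= B * b) by nra.
  assert (0 < 1 - B * b) by lra. assert (0 < 1 - B * t) by lra.
  assert (E1 : B * t ^ 2 / (1 - B * t) = t * (-1 + / (1 - B * t))) by (field; lra).
  assert (E2 : B * b / (1 - B * b) * t = t * (-1 + / (1 - B * b))) by (field; lra).
  rewrite E1, E2. apply Rmult_le_compat_l. lra.
  apply Rplus_le_compat_l. apply Rinv_le_contravar; lra.
Qed.

Lemma series_est (c : nat -> R) B sg t b : c 0%nat = 1 -> 1 <= B -> (forall j, Rabs (c j) <= B ^ j) ->
  Rabs sg = 1 -> 0 < t <= b -> B * b < 1 ->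
  Rabs (Series (fun j => c j * (sg * t) ^ (S j)) - sg * t) <= (B * b / (1 - B * b)) * t.
Proof.
  intros H0 HB Hc Hsg Ht Hb.
  assert (Hx : Rabs (sg * t) = t) by (rewrite Rabs_mult, Hsg, Rabs_right; lra).
  destruct (geom_bound c B (sg * t) H0 HB Hc) as [_ H]. rewrite Hx. nra.
  eapply Rle_trans. exact H. rewrite Hx.
  replace ((sg * t) ^ 2) with (t ^ 2).
  apply err_le; lra.
  replace ((sg * t) ^ 2) with (Rabs (sg * t) ^ 2). rewrite Hx. auto.
  rewrite RPow_abs. apply Rabs_right. apply Rle_ge. nra.
Qed.

Lemma cb k j : Rabs (sigma k (S j)) <= (2 ^ (S k)) ^ j.
Proof.
  rewrite Rabs_right by (apply Rle_ge, sigma_bound). eapply Rle_trans. apply sigma_bound. apply poly_le_exp.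
Qed.

Lemma cdb k j : Rabs (INR (S j) * sigma k (S j)) <= (2 ^ (S (S k))) ^ j.
Proof.
  pose proof (sigma_bound k (S j)). pose proof (pos_INR (S j)).
  rewrite Rabs_right by (apply Rle_ge, Rmult_le_pos; lra). eapply Rle_trans. 2: apply poly_le_exp.
  change (INR (S j) ^ S (S k)) with (INR (S j) * INR (S j) ^ (S k)). apply Rmult_le_compat_l; lra.
Qed.

Lemma c0 k : sigma k 1 = 1.
Proof. apply sigma_1. Qed.

Lemma d0 k : INR 1 * sigma k 1 = 1.
Proof. rewrite sigma_1. simpl. ring. Qed.

Lemma RtoC_nz r : r <> 0 -> RtoC r <> RtoC 0.
Proof. intros H H'. apply H. apply (f_equal Re) in H'. simpl in H'. auto. Qed.


Lemma Rabs_m1 : Rabs (-1) = 1.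
Proof. unfold Rabs. destruct Rcase_abs; lra. Qed.

Lemma zero_E4 : exists p, upper_half p /\ ev (eis_e 240 4) p = RtoC 0 /\
  ev (dx (eis_e 240 4)) p <> RtoC 0 /\ ev (eis_e (-504) 6) p <> RtoC 0.
Proof.
  set (S4 := fun t => Series (fun j => sigma 3 (S j) * (-1 * t) ^ (S j))).
  set (f := fun t => - (1 + 240 * S4 t)).
  assert (Hest : forall t b, 0 < t <= b -> 2 ^ 4 * b < 1 -> Rabs (S4 t - -1 * t) <= (2 ^ 4 * b / (1 - 2 ^ 4 * b)) * t).
  { intros t b Ht Hb. apply (series_est (fun j => sigma 3 (S j))); auto. apply c0. simpl; lra. apply cb. apply Rabs_m1. }
  destruct (Ranalysis5.IVT_interv f (1/1000) (1/200)) as [t0 [Ht0 Hf0]].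
  - intros a Ha. unfold f. apply (continuity_pt_opp (fun t => 1 + 240 * S4 t)).
    apply (continuity_pt_plus (fct_cte 1) (mult_real_fct 240 S4)).
    apply continuity_pt_const. intros x y; reflexivity.
    apply continuity_pt_scal. unfold S4. apply series_cont. apply goodc_sigma. apply Rabs_m1.
    rewrite Rabs_right; lra.
  - lra.
  - unfold f. specialize (Hest (1/1000) (1/1000) ltac:(lra) ltac:(simpl; lra)).
    replace (2 ^ 4 * (1 / 1000) / (1 - 2 ^ 4 * (1 / 1000))) with (2/123) in Hest by (simpl; field).
    revert Hest. split_Rabs; lra.
  - unfold f. specialize (Hest (1/200) (1/200) ltac:(lra) ltac:(simpl; lra)).
    replace (2 ^ 4 * (1 / 200) / (1 - 2 ^ 4 * (1 / 200))) with (2/23) in Hest by (simpl; field).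
    revert Hest. split_Rabs; lra.
  - exists (pt (-1/2) t0).
    assert (Ht0p : 0 < t0) by lra.
    assert (Hx : Rabs (- t0) < 1) by (rewrite Rabs_Ropp, Rabs_right; lra).
    split; [|split; [|split]].
    + apply uh_pt. lra.
    + simpl ev. rewrite qvar_pt_half by auto. rewrite pser_real.
      unfold f, S4 in Hf0. 
      rewrite (Series_ext _ (fun j => sigma 3 (S j) * (-1 * t0) ^ (S j))).
      2:{ intros n. replace (-1 * t0) with (- t0) by ring. reflexivity. }
      rewrite <- RtoC_mult, <- RtoC_plus. f_equal. lra.
    + rewrite ev_dx_eis. rewrite qvar_pt_half by auto. rewrite pser_dreal; auto. 2: apply goodc_sigma.
      apply Cmult_nz. apply RtoC_nz; lra. apply Cmult_nz. apply tpi_neq0. apply RtoC_nz.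
      pose proof (series_est (fun j => INR (S j) * sigma 3 (S j)) (2 ^ 5) (-1) t0 (1/200) (d0 3)
        ltac:(simpl; lra) (cdb 3) Rabs_m1 ltac:(lra) ltac:(simpl; lra)) as H.
      replace (2 ^ 5 * (1 / 200) / (1 - 2 ^ 5 * (1 / 200))) with (4/21) in H by (simpl; field).
      rewrite (Series_ext _ (fun j => INR (S j) * sigma 3 (S j) * (-1 * t0) ^ (S j))).
      2:{ intros n. replace (-1 * t0) with (- t0) by ring. reflexivity. }
      revert H. split_Rabs; lra.
    + simpl ev. rewrite qvar_pt_half by auto. rewrite pser_real.
      pose proof (series_est (fun j => sigma 5 (S j)) (2 ^ 6) (-1) t0 (1/200) (c0 5)
        ltac:(simpl; lra) (cb 5) Rabs_m1 ltac:(lra) ltac:(simpl; lra)) as H.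
      replace (2 ^ 6 * (1 / 200) / (1 - 2 ^ 6 * (1 / 200))) with (8/17) in H by (simpl; field).
      rewrite (Series_ext _ (fun j => sigma 5 (S j) * (-1 * t0) ^ (S j))).
      2:{ intros n. replace (-1 * t0) with (- t0) by ring. reflexivity. }
      rewrite <- RtoC_mult, <- RtoC_plus. apply RtoC_nz.
      revert H. split_Rabs; lra.
Qed.

Lemma zero_E6 : exists p, upper_half p /\ ev (eis_e (-504) 6) p = RtoC 0 /\
  ev (dx (eis_e (-504) 6)) p <> RtoC 0 /\ ev (eis_e 240 4) p <> RtoC 0.
Proof.
  set (S6 := fun t => Series (fun j => sigma 5 (S j) * (1 * t) ^ (S j))).
  set (f := fun t => - (1 + -504 * S6 t)).
  assert (Hest : forall t b, 0 < t <= b -> 2 ^ 6 * b < 1 -> Rabs (S6 t - 1 * t) <= (2 ^ 6 * b / (1 - 2 ^ 6 * b)) * t).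
  { intros t b Ht Hb. apply (series_est (fun j => sigma 5 (S j))); auto. apply c0. simpl; lra. apply cb. apply Rabs_R1. }
  destruct (Ranalysis5.IVT_interv f (1/10000) (1/300)) as [t0 [Ht0 Hf0]].
  - intros a Ha. unfold f. apply (continuity_pt_opp (fun t => 1 + -504 * S6 t)).
    apply (continuity_pt_plus (fct_cte 1) (mult_real_fct (-504) S6)).
    apply continuity_pt_const. intros x y; reflexivity.
    apply continuity_pt_scal. unfold S6. apply series_cont. apply goodc_sigma. apply Rabs_R1.
    rewrite Rabs_right; lra.
  - lra.
  - unfold f. specialize (Hest (1/10000) (1/10000) ltac:(lra) ltac:(simpl; lra)).
    replace (2 ^ 6 * (1 / 10000) / (1 - 2 ^ 6 * (1 / 10000))) with (4/621) in Hest by (simpl; field).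
    revert Hest. split_Rabs; lra.
  - unfold f. specialize (Hest (1/300) (1/300) ltac:(lra) ltac:(simpl; lra)).
    replace (2 ^ 6 * (1 / 300) / (1 - 2 ^ 6 * (1 / 300))) with (16/59) in Hest by (simpl; field).
    revert Hest. split_Rabs; lra.
  - exists (pt 0 t0).
    assert (Ht0p : 0 < t0) by lra.
    assert (Hx : Rabs t0 < 1) by (rewrite Rabs_right; lra).
    split; [|split; [|split]].
    + apply uh_pt. lra.
    + simpl ev. rewrite qvar_pt_zero by auto. rewrite pser_real.
      unfold f, S6 in Hf0. 
      rewrite (Series_ext _ (fun j => sigma 5 (S j) * (1 * t0) ^ (S j))).
      2:{ intros n. replace (1 * t0) with t0 by ring. reflexivity. }
      rewrite <- RtoC_mult, <- RtoC_plus. f_equal. lra.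
    + rewrite ev_dx_eis. rewrite qvar_pt_zero by auto. rewrite pser_dreal; auto. 2: apply goodc_sigma.
      apply Cmult_nz. apply RtoC_nz; lra. apply Cmult_nz. apply tpi_neq0. apply RtoC_nz.
      pose proof (series_est (fun j => INR (S j) * sigma 5 (S j)) (2 ^ 7) 1 t0 (1/300) (d0 5)
        ltac:(simpl; lra) (cdb 5) Rabs_R1 ltac:(lra) ltac:(simpl; lra)) as H.
      replace (2 ^ 7 * (1 / 300) / (1 - 2 ^ 7 * (1 / 300))) with (32/43) in H by (simpl; field).
      rewrite (Series_ext _ (fun j => INR (S j) * sigma 5 (S j) * (1 * t0) ^ (S j))).
      2:{ intros n. replace (1 * t0) with t0 by ring. reflexivity. }
      revert H. split_Rabs; lra.
    + simpl ev. rewrite qvar_pt_zero by auto. rewrite pser_real.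
      pose proof (series_est (fun j => sigma 3 (S j)) (2 ^ 4) 1 t0 (1/300) (c0 3)
        ltac:(simpl; lra) (cb 3) Rabs_R1 ltac:(lra) ltac:(simpl; lra)) as H.
      replace (2 ^ 4 * (1 / 300) / (1 - 2 ^ 4 * (1 / 300))) with (4/71) in H by (simpl; field).
      rewrite (Series_ext _ (fun j => sigma 3 (S j) * (1 * t0) ^ (S j))).
      2:{ intros n. replace (1 * t0) with t0 by ring. reflexivity. }
      rewrite <- RtoC_mult, <- RtoC_plus. apply RtoC_nz.
      revert H. split_Rabs; lra.
Qed.


Theorem theorem6p2 (m n N : nat) (HN : (0 < N)%nat) :
  satisfies_monic_MLDE (INR (4 * m + 6 * n))%R N
    (fun z => Cmult (Cpow (E4 z) m) (Cpow (E6 z) n)) ->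
  (Nat.max m n + 1 <= N)%nat.
Proof.
  intros [g [Hg Heq]].
  destruct (le_lt_dec (Nat.max m n + 1) N) as [H|H]; auto. exfalso.
  assert (Hgd : forall p, upper_half p -> forall i, (1 <= i <= N)%nat -> exists l, isd (g i) p l).
  { intros p Hp i Hi. destruct (Hg i Hi) as [Hd _]. apply Hd; auto. }
  assert (HE2 : forall z, upper_half z -> ev (eis_e (-24) 2) z = E2 z) by (intros; reflexivity).
  assert (N <= m \/ N <= n)%nat as [Hm | Hn] by lia.
  - destruct zero_E4 as [p [Hp [H4 [Hd4 H6]]]].
    apply (main_abstract (INR (4 * m + 6 * n)) m N (eis_e 240 4) (Pw (eis_e (-504) 6) n) (eis_e (-24) 2) p
             (fun z => Cmult (Cpow (E4 z) m) (Cpow (E6 z) n)) g); auto.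
    + apply wf_eis.
    + apply wf_Pw, wf_eis.
    + apply wf_eis.
    + intros z. rewrite ev_Pw. reflexivity.
    + rewrite ev_Pw. apply Cpow_nz. auto.
  - destruct zero_E6 as [p [Hp [H6 [Hd6 H4]]]].
    apply (main_abstract (INR (4 * m + 6 * n)) n N (eis_e (-504) 6) (Pw (eis_e 240 4) m) (eis_e (-24) 2) p
             (fun z => Cmult (Cpow (E4 z) m) (Cpow (E6 z) n)) g); auto.
    + apply wf_eis.
    + apply wf_Pw, wf_eis.
    + apply wf_eis.
    + intros z. rewrite ev_Pw. apply Cmult_comm.
    + rewrite ev_Pw. apply Cpow_nz. auto.
Qed.
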